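(* Let $T$ be a non-degenerate T-graph and $\phi_{\mathrm{ref}}$ the reference flow defined below. Then for every white vertex $w$ of $\mathcal H$, $\sum_{b\sim w}\phi_{\mathrm{ref}}(wb)=1$, and for every black vertex $b$ of $\mathcal H$, $\sum_{w\sim b}\phi_{\mathrm{ref}}(bw)=-1$.
   Context: Setup. $\mathcal H$ is the hexagonal lattice with black/white bipartition, $\mathcal H^\dagger$ its dual triangular lattice. A non-degenerate T-graph $T=\psi(\mathcal H^\dagger)\subset\mathbb C$ (built from a triangle $\Delta$ and a unit complex number $\lambda$) is a planar graph in which each black vertex $b$ of $\mathcal H$ corresponds to a segment $\psi(b)$, each white vertex $w$ to a non-degenerate triangular face $\psi(w)$ (similar to $\Delta$), every vertex of $T$ lies in exactly three segments, being an endpoint of two and in the interior of exactly one, and for adjacent $w,b$ the intersection $\psi(w)\cap\psi(b)$ is a nontrivial sub-segment of $\psi(b)$ on the boundary of $\psi(w)$. Reference flow: for adjacent white $w$ and black $b$, let $v_1,v_2$ be the two vertices of $T$ at the ends of $\psi(w)\cap\psi(b)$, and $S_1,S_2$ the segments containing $v_1,v_2$ in their interior (one of them may be $\psi(b)$). Let $\theta_i$ be the unsigned angle between $\psi(b)$ and $S_i$ measured on the side opposite to $\psi(w)$ ($\theta_i=0$ if $S_i=\psi(b)$). Set $\phi_{\mathrm{ref}}(wb)=\frac{\theta_1+\theta_2}{2\pi}$ and $\phi_{\mathrm{ref}}(bw)=-\phi_{\mathrm{ref}}(wb)$. *)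

(* Defs.v *)
From Stdlib Require Import Reals Lra ZArith Lia ClassicalEpsilon.
Open Scope R_scope.

Definition pt : Type := (R * R)%type.
Definition padd (p q : pt) : pt := (fst p + fst q, snd p + snd q).
Definition psub (p q : pt) : pt := (fst p - fst q, snd p - snd q).
Definition pscale (t : R) (p : pt) : pt := (t * fst p, t * snd p).
Definition dot (u v : pt) : R := fst u * fst v + snd u * snd v.
Definition cross (u v : pt) : R := fst u * snd v - snd u * fst v.
Definition pnorm (u : pt) : R := sqrt (dot u u).
Definition dist (p q : pt) : R := pnorm (psub p q).

Definition uangle (u v : pt) : R := acos (dot u v / (pnorm u * pnorm v)).

Definition cseg (x y z : pt) : Prop :=
  exists t, 0 <= t <= 1 /\ z = padd (pscale t x) (pscale (1 - t) y).
Definition sbetween (x y z : pt) : Prop :=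
  x <> y /\ exists t, 0 < t < 1 /\ z = padd (pscale t x) (pscale (1 - t) y).
Definition conv3 (p q r z : pt) : Prop :=
  exists a b c, 0 <= a /\ 0 <= b /\ 0 <= c /\ a + b + c = 1 /\
    z = padd (pscale a p) (padd (pscale b q) (pscale c r)).
Definition oconv3 (p q r z : pt) : Prop :=
  exists a b c, 0 < a /\ 0 < b /\ 0 < c /\ a + b + c = 1 /\
    z = padd (pscale a p) (padd (pscale b q) (pscale c r)).
Definition collinear3 (p q r : pt) : Prop := cross (psub q p) (psub r p) = 0.
Definition nondeg_tri (p q r : pt) : Prop := cross (psub q p) (psub r p) <> 0.

Definition in_interior (X : pt -> Prop) (z : pt) : Prop :=
  exists x y, X x /\ X y /\ sbetween x y z.
Definition is_endpoint (X : pt -> Prop) (z : pt) : Prop :=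
  X z /\ ~ in_interior X z.

Definition similar_tri (p q r p' q' r' : pt) : Prop :=
  exists k, 0 < k /\
   ((dist p q = k * dist p' q' /\ dist q r = k * dist q' r' /\ dist r p = k * dist r' p') \/
    (dist p q = k * dist q' r' /\ dist q r = k * dist r' p' /\ dist r p = k * dist p' q') \/
    (dist p q = k * dist r' p' /\ dist q r = k * dist p' q' /\ dist r p = k * dist q' r') \/
    (dist p q = k * dist q' p' /\ dist q r = k * dist p' r' /\ dist r p = k * dist r' q') \/
    (dist p q = k * dist p' r' /\ dist q r = k * dist r' q' /\ dist r p = k * dist q' p') \/
    (dist p q = k * dist r' q' /\ dist q r = k * dist q' p' /\ dist r p = k * dist p' r')).

(** * The hexagonal lattice H and its dual triangular lattice H^dagger.
    Vertices of H^dagger (= faces of H) are indexed by Z*Z; its triangles are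
    up-triangles {(i,j),(i+1,j),(i,j+1)} = white vertex (i,j) of H, and
    down-triangles {(i+1,j),(i,j+1),(i+1,j+1)} = black vertex (i,j) of H.
    White (i,j) is adjacent to the blacks (i,j), (i,j-1), (i-1,j). *)
Definition face : Type := (Z * Z)%type.
Definition white : Type := (Z * Z)%type.
Definition black : Type := (Z * Z)%type.

Definition wface (w : white) (k : nat) : face :=
  let (i, j) := w in
  match k with 0%nat => (i, j) | 1%nat => ((i + 1)%Z, j) | _ => (i, (j + 1)%Z) end.
Definition bface (b : black) (k : nat) : face :=
  let (i, j) := b in
  match k with 0%nat => ((i + 1)%Z, j) | 1%nat => (i, (j + 1)%Z)
             | _ => ((i + 1)%Z, (j + 1)%Z) end.

Definition wnb (w : white) (k : nat) : black :=
  let (i, j) := w in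
  match k with 0%nat => (i, j) | 1%nat => (i, (j - 1)%Z) | _ => ((i - 1)%Z, j) end.
(** the two faces shared by w and wnb w k (endpoints of the dual edge) *)
Definition efst (w : white) (k : nat) : face :=
  let (i, j) := w in
  match k with 0%nat => ((i + 1)%Z, j) | _ => (i, j) end.
Definition esnd (w : white) (k : nat) : face :=
  let (i, j) := w in
  match k with 0%nat => (i, (j + 1)%Z) | 1%nat => ((i + 1)%Z, j) | _ => (i, (j + 1)%Z) end.
(** the third vertex of the triangle of w, not on the edge shared with wnb w k *)
Definition ethird (w : white) (k : nat) : face :=
  let (i, j) := w in
  match k with 0%nat => (i, j) | 1%nat => (i, (j + 1)%Z) | _ => ((i + 1)%Z, j) end.

(** the three edges at black b, as pairs (white, index): wnb w k = b *)
Definition bnbW (b : black) (k : nat) : white :=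
  let (i, j) := b in
  match k with 0%nat => (i, j) | 1%nat => (i, (j + 1)%Z) | _ => ((i + 1)%Z, j) end.
Definition bnbK (k : nat) : nat := k.

(** the three black vertices (segments) around a face f *)
Definition fnb (f : face) (k : nat) : black :=
  let (a, c) := f in
  match k with 0%nat => ((a - 1)%Z, c) | 1%nat => (a, (c - 1)%Z)
             | _ => ((a - 1)%Z, (c - 1)%Z) end.

(** * T-graphs: psi maps faces of H (vertices of H^dagger) to the plane *)
Section TG.
Variable psi : face -> pt.

Definition tri (w : white) : pt -> Prop :=
  conv3 (psi (wface w 0)) (psi (wface w 1)) (psi (wface w 2)).
Definition tri_int (w : white) : pt -> Prop :=
  oconv3 (psi (wface w 0)) (psi (wface w 1)) (psi (wface w 2)).
Definition tri_bd (w : white) (z : pt) : Prop :=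
  cseg (psi (wface w 0)) (psi (wface w 1)) z \/
  cseg (psi (wface w 1)) (psi (wface w 2)) z \/
  cseg (psi (wface w 2)) (psi (wface w 0)) z.
Definition sg (b : black) : pt -> Prop :=
  conv3 (psi (bface b 0)) (psi (bface b 1)) (psi (bface b 2)).

Definition is_TGraph : Prop :=
  (exists d0 d1 d2 : pt, nondeg_tri d0 d1 d2 /\
     forall w, nondeg_tri (psi (wface w 0)) (psi (wface w 1)) (psi (wface w 2)) /\
       similar_tri (psi (wface w 0)) (psi (wface w 1)) (psi (wface w 2)) d0 d1 d2) /\
  (forall b, collinear3 (psi (bface b 0)) (psi (bface b 1)) (psi (bface b 2)) /\
     ~ (psi (bface b 0) = psi (bface b 1) /\ psi (bface b 1) = psi (bface b 2))) /\
  (forall f, (forall b, sg b (psi f) -> b = fnb f 0 \/ b = fnb f 1 \/ b = fnb f 2) /\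
     ((in_interior (sg (fnb f 0)) (psi f) /\ is_endpoint (sg (fnb f 1)) (psi f) /\
       is_endpoint (sg (fnb f 2)) (psi f)) \/
      (is_endpoint (sg (fnb f 0)) (psi f) /\ in_interior (sg (fnb f 1)) (psi f) /\
       is_endpoint (sg (fnb f 2)) (psi f)) \/
      (is_endpoint (sg (fnb f 0)) (psi f) /\ is_endpoint (sg (fnb f 1)) (psi f) /\
       in_interior (sg (fnb f 2)) (psi f)))) /\
  (forall w k, (k < 3)%nat -> exists x y, x <> y /\
     (forall z, (tri w z /\ sg (wnb w k) z) <-> cseg x y z) /\
     (forall z, cseg x y z -> tri_bd w z)) /\
  (* planarity of the straight-line embedding: faces have disjoint interiors,
     segments do not enter faces, distinct segments meet in at most one point *)
  (forall w w' z, w <> w' -> tri_int w z -> tri_int w' z -> False) /\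
  (forall b w z, sg b z -> tri_int w z -> False) /\
  (forall b b' z z', b <> b' -> sg b z -> sg b' z -> sg b z' -> sg b' z' -> z = z').

Definition int_seg (f : face) : black :=
  if excluded_middle_informative (in_interior (sg (fnb f 0)) (psi f)) then fnb f 0
  else if excluded_middle_informative (in_interior (sg (fnb f 1)) (psi f)) then fnb f 1
  else fnb f 2.

(** angle theta at the endpoint v = psi f of psi(w) /\ psi(b), where o is the
    other endpoint and p the third vertex of psi(w): the angle between psi(b)
    (direction o - v) and the ray of S = int_seg f on the side of line(v,o)
    opposite to psi(w); 0 if S = b. *)
Definition opp_side (v o p x : pt) : Prop :=
  cross (psub o v) (psub x v) * cross (psub o v) (psub p v) < 0.

Definition theta (b : black) (f fo g : face) : R :=
  let v := psi f in let o := psi fo in let p := psi g in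
  let S := int_seg f in
  if excluded_middle_informative (S = b) then 0
  else
    let x := if excluded_middle_informative (opp_side v o p (psi (bface S 0)))
             then psi (bface S 0)
             else if excluded_middle_informative (opp_side v o p (psi (bface S 1)))
             then psi (bface S 1) else psi (bface S 2) in
    uangle (psub o v) (psub x v).

Definition phi_ref (w : white) (k : nat) : R :=
  (theta (wnb w k) (efst w k) (esnd w k) (ethird w k) +
   theta (wnb w k) (esnd w k) (efst w k) (ethird w k)) / (2 * PI).
Definition phi_ref_bw (b : black) (k : nat) : R := - phi_ref (bnbW b k) (bnbK k).
End TG.

Lemma bnb_ok : forall b k, (k < 3)%nat -> wnb (bnbW b k) (bnbK k) = b.
Proof.
  intros [i j] k Hk. destruct k as [|[|[|k]]]; simpl;
  try (f_equal; lia); lia.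
Qed.

(* Main.v *)
Require Import Defs.
From Stdlib Require Import Reals ZArith Lra Lia Psatz ClassicalEpsilon.
Open Scope R_scope.


Lemma pnorm_pos u : 0 < dot u u -> 0 < pnorm u.
Proof. intros; unfold pnorm; apply sqrt_lt_R0; auto. Qed.

Lemma pnorm_sq u : pnorm u * pnorm u = dot u u.
Proof. unfold pnorm; apply sqrt_sqrt. destruct u; unfold dot; simpl; nra. Qed.

Lemma pnorm_scale l v : pnorm (pscale l v) = Rabs l * pnorm v.
Proof.
  unfold pnorm, pscale, dot; destruct v as [v1 v2]; simpl.
  replace (l * v1 * (l * v1) + l * v2 * (l * v2)) with (Rsqr l * (v1*v1+v2*v2)) by (unfold Rsqr; ring).
  rewrite sqrt_mult_alt by apply Rle_0_sqr. rewrite sqrt_Rsqr_abs. auto.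
Qed.

Lemma lagrange u v : dot u v * dot u v + cross u v * cross u v = dot u u * dot v v.
Proof. destruct u, v; unfold dot, cross; simpl; ring. Qed.

Lemma cos_ratio_bound u v : 0 < dot u u -> 0 < dot v v ->
  -1 <= dot u v / (pnorm u * pnorm v) <= 1.
Proof.
  intros Hu Hv.
  assert (Pu := pnorm_pos u Hu). assert (Pv := pnorm_pos v Hv).
  assert (Su := pnorm_sq u). assert (Sv := pnorm_sq v).
  assert (L := lagrange u v).
  assert (Hsq: (dot u v)*(dot u v) <= (pnorm u * pnorm v) * (pnorm u * pnorm v)) by nra.
  assert (PP : 0 < pnorm u * pnorm v) by nra.
  assert (Habs: - (pnorm u * pnorm v) <= dot u v <= pnorm u * pnorm v) by (split; nra).
  split; [apply (Rmult_le_reg_r (pnorm u * pnorm v)); [nra|] | apply (Rmult_le_reg_r (pnorm u * pnorm v)); [nra|]];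
  unfold Rdiv; rewrite Rmult_assoc, Rinv_l by nra; lra.
Qed.

Lemma cos_uangle u v : 0 < dot u u -> 0 < dot v v ->
  cos (uangle u v) = dot u v / (pnorm u * pnorm v).
Proof. intros; unfold uangle; apply cos_acos, cos_ratio_bound; auto. Qed.

Lemma sin_uangle u v : 0 < dot u u -> 0 < dot v v ->
  sin (uangle u v) = Rabs (cross u v) / (pnorm u * pnorm v).
Proof.
  intros Hu Hv. unfold uangle. rewrite sin_acos by (apply cos_ratio_bound; auto).
  assert (Pu := pnorm_pos u Hu). assert (Pv := pnorm_pos v Hv).
  assert (Su := pnorm_sq u). assert (Sv := pnorm_sq v).
  assert (L := lagrange u v).
  replace (1 - (dot u v / (pnorm u * pnorm v))²) with (Rsqr (cross u v / (pnorm u * pnorm v))).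
  - rewrite sqrt_Rsqr_abs. unfold Rdiv. rewrite Rabs_mult. rewrite (Rabs_pos_eq (/ _)); auto.
    left; apply Rinv_0_lt_compat; nra.
  - unfold Rsqr. rewrite <- Su, <- Sv in L.
    field_simplify_eq; [nra | split; lra].
Qed.

Lemma uangle_bound u v : 0 <= uangle u v <= PI.
Proof. apply acos_bound. Qed.

Lemma uangle_sym u v : uangle u v = uangle v u.
Proof. unfold uangle. f_equal. rewrite Rmult_comm. f_equal. destruct u, v; unfold dot; simpl; ring. Qed.

Lemma uangle_scale_pos u v l : 0 < dot u u -> 0 < dot v v -> 0 < l ->
  uangle u (pscale l v) = uangle u v.
Proof.
  intros Hu Hv Hl. unfold uangle. rewrite pnorm_scale, Rabs_pos_eq by lra.
  assert (Pu := pnorm_pos u Hu). assert (Pv := pnorm_pos v Hv).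
  f_equal. replace (dot u (pscale l v)) with (l * dot u v) by (destruct u, v; unfold dot, pscale; simpl; ring).
  field. split; lra.
Qed.

Lemma uangle_scale_neg u v l : 0 < dot u u -> 0 < dot v v -> l < 0 ->
  uangle u (pscale l v) = PI - uangle u v.
Proof.
  intros Hu Hv Hl. unfold uangle. rewrite pnorm_scale, Rabs_left by lra.
  assert (Pu := pnorm_pos u Hu). assert (Pv := pnorm_pos v Hv).
  rewrite <- acos_opp. f_equal. replace (dot u (pscale l v)) with (l * dot u v) by (destruct u, v; unfold dot, pscale; simpl; ring).
  field. split; lra.
Qed.

Lemma uangle_add u v w : 0 < dot u u -> 0 < dot v v -> 0 < dot w w ->
  cross u v * cross v w > 0 -> cross u v * cross u w > 0 ->
  uangle u v + uangle v w = uangle u w.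
Proof.
  intros Hu Hv Hw H1 H2.
  assert (Pu := pnorm_pos u Hu). assert (Pv := pnorm_pos v Hv). assert (Pw := pnorm_pos w Hw).
  assert (Sv := pnorm_sq v).
  assert (Id1 : dot u v * dot v w - cross u v * cross v w = dot v v * dot u w)
    by (destruct u, v, w; unfold dot, cross; simpl; ring).
  assert (Id2 : cross u v * dot v w + dot u v * cross v w = dot v v * cross u w)
    by (destruct u, v, w; unfold dot, cross; simpl; ring).
  assert (Ba := uangle_bound u v). assert (Bb := uangle_bound v w).
  assert (Hs : 0 < sin (uangle u v + uangle v w)).
  { rewrite sin_plus, !sin_uangle, !cos_uangle by auto.
    destruct (Rlt_dec 0 (cross u v)) as [Hp|Hn].
    - assert (0 < cross v w) by nra. assert (0 < cross u w) by nra.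
      rewrite !Rabs_pos_eq by lra.
      replace (cross u v / (pnorm u * pnorm v) * (dot v w / (pnorm v * pnorm w)) +
        dot u v / (pnorm u * pnorm v) * (cross v w / (pnorm v * pnorm w))) with
        ((cross u v * dot v w + dot u v * cross v w) / (pnorm u * (pnorm v * pnorm v) * pnorm w))
        by (field; lra).
      rewrite Id2. apply Rdiv_lt_0_compat; [apply Rmult_lt_0_compat; lra|]. apply Rmult_lt_0_compat; [|lra]. nra.
    - apply Rnot_lt_le in Hn. assert (cross u v <> 0) by (intro h; rewrite h in H1; lra).
      assert (cross u v < 0) by lra. assert (cross v w < 0) by nra. assert (cross u w < 0) by nra.
      rewrite !Rabs_left by lra.
      replace (- cross u v / (pnorm u * pnorm v) * (dot v w / (pnorm v * pnorm w)) +
        dot u v / (pnorm u * pnorm v) * (- cross v w / (pnorm v * pnorm w))) with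
        (- (cross u v * dot v w + dot u v * cross v w) / (pnorm u * (pnorm v * pnorm v) * pnorm w))
        by (field; lra).
      rewrite Id2. apply Rdiv_lt_0_compat; [|apply Rmult_lt_0_compat; [|lra]; nra].
      assert (0 < dot v v * - cross u w) by (apply Rmult_lt_0_compat; lra). lra. }
  assert (Hlt : uangle u v + uangle v w < PI).
  { destruct (Rlt_dec (uangle u v + uangle v w) PI) as [h|h]; auto.
    assert (sin (uangle u v + uangle v w) <= 0) by (apply sin_le_0; lra). lra. }
  transitivity (acos (cos (uangle u v + uangle v w))).
  - symmetry; apply acos_cos; lra.
  - unfold uangle at 3. f_equal.
    rewrite cos_plus, !sin_uangle, !cos_uangle by auto.
    destruct (Rlt_dec 0 (cross u v)) as [Hp|Hn].
    + assert (0 < cross v w) by nra. rewrite !Rabs_pos_eq by lra.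
      rewrite <- Sv in Id1. field_simplify_eq; [nra | lra].
    + apply Rnot_lt_le in Hn. assert (cross u v <> 0) by (intro h; rewrite h in H1; lra).
      assert (cross u v < 0) by lra. assert (cross v w < 0) by nra. rewrite !Rabs_left by lra.
      rewrite <- Sv in Id1. field_simplify_eq; [nra | lra].
Qed.

Lemma cross_nz_dot u v : cross u v <> 0 -> 0 < dot u u /\ 0 < dot v v.
Proof.
  intros H. assert (Hs : 0 < cross u v * cross u v) by (apply Rsqr_pos_lt in H; unfold Rsqr in H; auto).
  assert (L := lagrange u v).
  assert (0 <= dot u u) by (destruct u; unfold dot; simpl; nra).
  assert (0 <= dot v v) by (destruct v; unfold dot; simpl; nra).
  assert (0 <= dot u v * dot u v) by nra.
  split; nra.
Qed.

Lemma psub_neg x y : psub x y = pscale (-1) (psub y x).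
Proof. destruct x, y; unfold psub, pscale; simpl; f_equal; ring. Qed.

Lemma dot_neg u : dot (pscale (-1) u) (pscale (-1) u) = dot u u.
Proof. destruct u; unfold dot, pscale; simpl; ring. Qed.

Lemma uangle_negneg u v : 0 < dot u u -> 0 < dot v v ->
  uangle (pscale (-1) u) (pscale (-1) v) = uangle u v.
Proof.
  intros. rewrite uangle_scale_neg by (try rewrite dot_neg; auto; lra).
  rewrite uangle_sym, uangle_scale_neg by (auto; lra). rewrite uangle_sym. ring.
Qed.

Lemma tri_sum A B C : cross (psub B A) (psub C A) <> 0 ->
  uangle (psub B A) (psub C A) + uangle (psub A B) (psub C B) + uangle (psub A C) (psub B C) = PI.
Proof.
  intros H.
  assert (E1 : cross (psub C A) (psub C B) = cross (psub B A) (psub C A))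
    by (destruct A, B, C; unfold cross, psub; simpl; ring).
  assert (E2 : cross (psub B A) (psub C B) = cross (psub B A) (psub C A))
    by (destruct A, B, C; unfold cross, psub; simpl; ring).
  destruct (cross_nz_dot _ _ H) as [Hab Hac].
  assert (H' : cross (psub C A) (psub C B) <> 0) by (rewrite E1; auto).
  destruct (cross_nz_dot _ _ H') as [_ Hbc].
  rewrite (psub_neg A C), (psub_neg B C), uangle_negneg by auto.
  rewrite (psub_neg A B). rewrite (uangle_sym (pscale (-1) (psub B A))), uangle_scale_neg, (uangle_sym (psub C B)) by (auto; lra).
  rewrite <- (uangle_add (psub B A) (psub C A) (psub C B)); auto.
  - ring.
  - rewrite E1. apply Rsqr_pos_lt in H. unfold Rsqr in H. lra.
  - rewrite E2. apply Rsqr_pos_lt in H. unfold Rsqr in H. lra.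
Qed.

Lemma pscale_comp a b d : pscale a (pscale b d) = pscale (a*b) d.
Proof. destruct d; unfold pscale; simpl; f_equal; ring. Qed.

Lemma cross_scale_r u a d : cross u (pscale a d) = a * cross u d.
Proof. destruct u, d; unfold cross, pscale; simpl; ring. Qed.

Lemma dot_scale a d : dot (pscale a d) (pscale a d) = a*a*dot d d.
Proof. destruct d; unfold dot, pscale; simpl; ring. Qed.

Lemma vlemma r1 r2 d a1 a2 : cross r1 r2 <> 0 -> 0 < dot d d ->
  cross r1 d <> 0 -> cross r2 d <> 0 ->
  ~ (cross d r2 * cross r1 r2 > 0 /\ cross r1 d * cross r1 r2 > 0) ->
  ~ (cross d r2 * cross r1 r2 < 0 /\ cross r1 d * cross r1 r2 < 0) ->
  a1 * cross r1 d * cross r1 r2 < 0 -> a2 * cross r2 d * cross r2 r1 < 0 ->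
  uangle r1 (pscale a1 d) + uangle r2 (pscale a2 d) = PI - uangle r1 r2.
Proof.
  intros Hc Hd HX HY N1 N2 H1 H2.
  assert (E1 : cross d r2 = - cross r2 d) by (destruct d, r2; unfold cross; simpl; ring).
  assert (E2 : cross r2 r1 = - cross r1 r2) by (destruct r1, r2; unfold cross; simpl; ring).
  rewrite E1 in N1, N2. rewrite E2 in H2.
  set (X := cross r1 d) in *. set (Y := cross r2 d) in *. set (c := cross r1 r2) in *.
  assert (XY : 0 < X * Y).
  { assert (SX : X < 0 \/ 0 < X) by (destruct (Rtotal_order X 0) as [h|[h|h]]; auto; contradiction).
    assert (SY : Y < 0 \/ 0 < Y) by (destruct (Rtotal_order Y 0) as [h|[h|h]]; auto; contradiction).
    assert (SC : c < 0 \/ 0 < c) by (destruct (Rtotal_order c 0) as [h|[h|h]]; auto; contradiction).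
    destruct SX, SY, SC; try nra; exfalso; first [apply N1; split; nra | apply N2; split; nra]. }
  assert (A12 : a1 * a2 < 0).
  { assert (0 < c * c) by (apply Rsqr_pos_lt in Hc; unfold Rsqr in Hc; lra).
    assert (P : (a1 * X * c) * (a2 * Y * - c) > 0) by nra.
    assert (a1 * a2 * (X * Y) * (c*c) < 0) by nra.
    destruct (Rtotal_order (a1*a2) 0) as [h|[h|h]]; auto.
    - rewrite h in *. lra.
    - assert (0 < (a1*a2)*(X*Y)) by (apply Rmult_lt_0_compat; auto).
      assert (0 < (a1*a2)*(X*Y)*(c*c)) by (apply Rmult_lt_0_compat; auto). lra. }
  assert (a2 <> 0) by (intro h; rewrite h in A12; lra).
  destruct (cross_nz_dot _ _ Hc) as [D1 D2].
  set (u := pscale a2 d).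
  assert (Du : 0 < dot u u) by (unfold u; rewrite dot_scale; assert (0 < a2*a2) by (apply Rsqr_pos_lt in H; unfold Rsqr in H; lra); nra).
  replace (pscale a1 d) with (pscale (a1/a2) u) by (unfold u; rewrite pscale_comp; f_equal; field; auto).
  rewrite uangle_scale_neg; auto.
  2:{ assert (0 < a2 * a2) by nra. replace (a1/a2) with ((a1*a2)/(a2*a2)) by (field; auto).
      apply Rdiv_neg_pos; auto. }
  rewrite <- (uangle_add r1 r2 u); auto.
  - ring.
  - unfold u; rewrite cross_scale_r. fold Y c. nra.
  - unfold u; rewrite cross_scale_r. fold X c. nra.
Qed.


Lemma pt_ext (p q : pt) : fst p = fst q -> snd p = snd q -> p = q.
Proof. destruct p, q; simpl; intros; subst; auto. Qed.

Lemma core_interior v e f :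
  in_interior (conv3 v e f) v ->
  0 < dot (psub f v) (psub f v) /\ exists tau, 0 < tau /\ psub e v = pscale (- tau) (psub f v).
Proof.
  intros [x [y [[a [b [c [Ha [Hb [Hc [Habc Hx]]]]]]] [[a' [b' [c' [Ha' [Hb' [Hc' [Habc' Hy]]]]]]] [Hxy [t [Ht Hv]]]]]]].
  destruct v as [v1 v2], e as [e1 e2], f as [f1 f2], x as [x1 x2], y as [y1 y2].
  unfold padd, pscale in *; simpl in *.
  injection Hx as Hx1 Hx2. injection Hy as Hy1 Hy2. injection Hv as Hv1 Hv2.
  set (B := t*b + (1-t)*b'). set (G := t*c + (1-t)*c').
  assert (E1 : B*(e1-v1) + G*(f1-v1) = 0) by (unfold B, G; subst; nra).
  assert (E2 : B*(e2-v2) + G*(f2-v2) = 0) by (unfold B, G; subst; nra).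
  assert (X1 : x1 - v1 = b*(e1-v1) + c*(f1-v1)) by (subst; nra).
  assert (X2 : x2 - v2 = b*(e2-v2) + c*(f2-v2)) by (subst; nra).
  assert (Y1 : y1 - v1 = b'*(e1-v1) + c'*(f1-v1)) by (subst; nra).
  assert (Y2 : y2 - v2 = b'*(e2-v2) + c'*(f2-v2)) by (subst; nra).
  clear Hx1 Hx2 Hy1 Hy2 Hv1 Hv2.
  assert (Hne : ~ (x1 = y1 /\ x2 = y2)) by (intros [h1 h2]; apply Hxy; subst; auto).
  assert (B0 : B = 0 -> b = 0 /\ b' = 0) by (unfold B; intros; split; nra).
  assert (G0 : G = 0 -> c = 0 /\ c' = 0) by (unfold G; intros; split; nra).
  assert (Bp : 0 <= B) by (unfold B; nra). assert (Gp : 0 <= G) by (unfold G; nra).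
  assert (Fn : ~ (f1 - v1 = 0 /\ f2 - v2 = 0)).
  { intros [h1 h2]. rewrite h1, h2 in *.
    destruct (Req_dec B 0) as [hb|hb].
    - destruct (B0 hb). subst b b'. apply Hne. split; nra.
    - assert (e1 - v1 = 0) by (apply (Rmult_eq_reg_l B); lra).
      assert (e2 - v2 = 0) by (apply (Rmult_eq_reg_l B); lra).
      apply Hne; split; nra. }
  assert (En : ~ (e1 - v1 = 0 /\ e2 - v2 = 0)).
  { intros [h1 h2]. rewrite h1, h2 in *.
    destruct (Req_dec G 0) as [hb|hb].
    - destruct (G0 hb). subst c c'. apply Hne. split; nra.
    - assert (f1 - v1 = 0) by (apply (Rmult_eq_reg_l G); lra).
      assert (f2 - v2 = 0) by (apply (Rmult_eq_reg_l G); lra).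
      apply Hne; split; nra. }
  assert (Bpos : 0 < B).
  { destruct Bp as [|hb]; auto. exfalso. symmetry in hb. destruct (B0 hb). rewrite hb in *.
    destruct (Req_dec G 0) as [hg|hg].
    - destruct (G0 hg). subst. apply Hne; split; nra.
    - apply Fn; split; apply (Rmult_eq_reg_l G); lra. }
  assert (Gpos : 0 < G).
  { destruct Gp as [|hb]; auto. exfalso. symmetry in hb. rewrite hb in *.
    apply En; split; apply (Rmult_eq_reg_l B); lra. }
  split.
  - unfold dot, psub; simpl.
    destruct (Req_dec (f1 - v1) 0) as [h1|h1]; [destruct (Req_dec (f2 - v2) 0) as [h2|h2]|]; [exfalso; tauto| |].
    + apply Rsqr_pos_lt in h2. unfold Rsqr in h2. nra.
    + apply Rsqr_pos_lt in h1. unfold Rsqr in h1. pose proof (Rle_0_sqr (f2 - v2)). unfold Rsqr in *. lra.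
  - exists (G / B). split; [apply Rdiv_lt_0_compat; auto|].
    unfold psub; simpl. f_equal; field_simplify_eq; auto; lra.
Qed.

Lemma conv3_swap12 p q r z : conv3 p q r z -> conv3 q p r z.
Proof.
  intros [a [b [c [Ha [Hb [Hc [Hs Hz]]]]]]]. exists b, a, c. repeat split; auto; try lra; try (left; lra); try (right; left; lra); try (right; right; lra).
  subst. destruct p, q, r; unfold padd, pscale; simpl; f_equal; ring.
Qed.
Lemma conv3_swap23 p q r z : conv3 p q r z -> conv3 p r q z.
Proof.
  intros [a [b [c [Ha [Hb [Hc [Hs Hz]]]]]]]. exists a, c, b. repeat split; auto; try lra; try (left; lra); try (right; left; lra); try (right; right; lra).
  subst. destruct p, q, r; unfold padd, pscale; simpl; f_equal; ring.
Qed.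
Lemma oconv3_swap12 p q r z : oconv3 p q r z -> oconv3 q p r z.
Proof.
  intros [a [b [c [Ha [Hb [Hc [Hs Hz]]]]]]]. exists b, a, c. repeat split; auto; try lra; try (left; lra); try (right; left; lra); try (right; right; lra).
  subst. destruct p, q, r; unfold padd, pscale; simpl; f_equal; ring.
Qed.
Lemma oconv3_swap23 p q r z : oconv3 p q r z -> oconv3 p r q z.
Proof.
  intros [a [b [c [Ha [Hb [Hc [Hs Hz]]]]]]]. exists a, c, b. repeat split; auto; try lra; try (left; lra); try (right; left; lra); try (right; right; lra).
  subst. destruct p, q, r; unfold padd, pscale; simpl; f_equal; ring.
Qed.
Lemma conv3_p p q r : conv3 p q r p.
Proof. exists 1, 0, 0. repeat split; try lra. destruct p, q, r; unfold padd, pscale; simpl; f_equal; ring. Qed.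
Lemma conv3_q p q r : conv3 p q r q.
Proof. apply conv3_swap12, conv3_p. Qed.
Lemma conv3_r p q r : conv3 p q r r.
Proof. apply conv3_swap23, conv3_q. Qed.
Lemma conv3_convex p q r x y t : conv3 p q r x -> conv3 p q r y -> 0 <= t <= 1 ->
  conv3 p q r (padd (pscale t x) (pscale (1 - t) y)).
Proof.
  intros [a [b [c [Ha [Hb [Hc [Hs Hz]]]]]]] [a' [b' [c' [Ha' [Hb' [Hc' [Hs' Hz']]]]]]] Ht.
  exists (t*a + (1-t)*a'), (t*b+(1-t)*b'), (t*c+(1-t)*c'). repeat split; try nra.
  subst. destruct p, q, r; unfold padd, pscale; simpl; f_equal; ring.
Qed.

Lemma in_interior_mono (X Y : pt -> Prop) v : (forall z, X z -> Y z) -> in_interior X v -> in_interior Y v.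
Proof. intros H [x [y [Hx [Hy Hb]]]]. exists x, y. auto. Qed.

Lemma padd_psub v e : padd v (psub e v) = e.
Proof. destruct v, e; unfold padd, psub; simpl; f_equal; ring. Qed.
Lemma psub_padd v w : psub (padd v w) v = w.
Proof. destruct v, w; unfold padd, psub; simpl; f_equal; ring. Qed.

Lemma seg_dir Q0 Q1 Q2 v : in_interior (conv3 Q0 Q1 Q2) v -> (v = Q0 \/ v = Q1 \/ v = Q2) ->
  exists d a0 a1 a2, 0 < dot d d /\ Q0 = padd v (pscale a0 d) /\ Q1 = padd v (pscale a1 d) /\
    Q2 = padd v (pscale a2 d) /\ (a0 < 0 \/ a1 < 0 \/ a2 < 0) /\ (a0 > 0 \/ a1 > 0 \/ a2 > 0).
Proof.
  assert (Z : forall v e, v = padd v (pscale 0 e)) by (intros [? ?] [? ?]; unfold padd, pscale, psub; simpl; f_equal; ring).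
  assert (O : forall v e, e = padd v (pscale 1 (psub e v))) by (intros [? ?] [? ?]; unfold padd, pscale, psub; simpl; f_equal; ring).
  intros H [E|[E|E]]; subst v.
  - destruct (core_interior _ _ _ H) as [Hd [tau [Ht He]]].
    exists (psub Q2 Q0), 0, (-tau), 1.
    repeat split; auto; try lra; try (left; lra); try (right; left; lra); try (right; right; lra).
    all: first [ apply O | apply Z | (rewrite <- He; symmetry; apply padd_psub)].
  - assert (H' : in_interior (conv3 Q1 Q0 Q2) Q1) by (eapply in_interior_mono; [|exact H]; apply conv3_swap12).
    destruct (core_interior _ _ _ H') as [Hd [tau [Ht He]]].
    exists (psub Q2 Q1), (-tau), 0, 1.
    repeat split; auto; try lra; try (left; lra); try (right; left; lra); try (right; right; lra).
    all: first [ apply O | apply Z | (rewrite <- He; symmetry; apply padd_psub)].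
  - assert (H' : in_interior (conv3 Q2 Q0 Q1) Q2).
    { eapply in_interior_mono; [|exact H]. intros z hz. apply conv3_swap12. apply conv3_swap23. exact hz. }
    destruct (core_interior _ _ _ H') as [Hd [tau [Ht He]]].
    exists (psub Q1 Q2), (-tau), 1, 0.
    repeat split; auto; try lra; try (left; lra); try (right; left; lra); try (right; right; lra).
    all: first [ apply O | apply Z | (rewrite <- He; symmetry; apply padd_psub)].
Qed.


Lemma bface_fnb f k : (k < 3)%nat -> bface (fnb f k) k = f.
Proof. destruct f as [a c]; intros Hk; destruct k as [|[|[|k]]]; simpl; try lia; f_equal; lia. Qed.

Section S.
Variable psi : face -> pt.
Hypothesis TG : is_TGraph psi.

Lemma int_seg_spec f :
  (int_seg psi f = fnb f 0 \/ int_seg psi f = fnb f 1 \/ int_seg psi f = fnb f 2) /\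
  in_interior (sg psi (int_seg psi f)) (psi f) /\
  (forall k, (k < 3)%nat -> in_interior (sg psi (fnb f k)) (psi f) -> int_seg psi f = fnb f k).
Proof.
  destruct TG as [_ [_ [HV _]]]. destruct (HV f) as [_ D].
  unfold is_endpoint in D.
  unfold int_seg.
  destruct (excluded_middle_informative (in_interior (sg psi (fnb f 0)) (psi f))) as [h0|h0];
  [|destruct (excluded_middle_informative (in_interior (sg psi (fnb f 1)) (psi f))) as [h1|h1]].
  - split; [auto|split; auto]. intros k Hk Hi. destruct k as [|[|[|k]]]; try lia; auto; exfalso; tauto.
  - split; [auto|split; auto]. intros k Hk Hi. destruct k as [|[|[|k]]]; try lia; auto; exfalso; tauto.
  - assert (h2 : in_interior (sg psi (fnb f 2)) (psi f)) by tauto.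
    split; [auto|split; auto]. intros k Hk Hi. destruct k as [|[|[|k]]]; try lia; auto; exfalso; tauto.
Qed.

Lemma opp_side_iff v o p a d :
  opp_side v o p (padd v (pscale a d)) <-> a * (cross (psub o v) d * cross (psub o v) (psub p v)) < 0.
Proof. unfold opp_side. rewrite psub_padd, cross_scale_r. split; intros; lra. Qed.

Lemma theta_spec f : exists d, 0 < dot d d /\
 (forall i, (i<3)%nat -> exists a, psi (bface (int_seg psi f) i) = padd (psi f) (pscale a d)) /\
 (exists a, a > 0 /\ sg psi (int_seg psi f) (padd (psi f) (pscale a d))) /\
 (exists a, a < 0 /\ sg psi (int_seg psi f) (padd (psi f) (pscale a d))) /\
 (forall b fo g, int_seg psi f <> b ->
    cross (psub (psi fo) (psi f)) d * cross (psub (psi fo) (psi f)) (psub (psi g) (psi f)) <> 0 ->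
    exists a, a * (cross (psub (psi fo) (psi f)) d * cross (psub (psi fo) (psi f)) (psub (psi g) (psi f))) < 0 /\
      theta psi b f fo g = uangle (psub (psi fo) (psi f)) (pscale a d)).
Proof.
  destruct (int_seg_spec f) as [Hk [Hint _]].
  set (S := int_seg psi f) in *.
  assert (Hv : psi f = psi (bface S 0) \/ psi f = psi (bface S 1) \/ psi f = psi (bface S 2)).
  { destruct Hk as [e|[e|e]]; rewrite e; rewrite bface_fnb by lia; auto. }
  unfold sg in Hint.
  destruct (seg_dir _ _ _ _ Hint Hv) as [d [a0 [a1 [a2 [Hd [E0 [E1 [E2 [Neg Pos]]]]]]]]].
  exists d. split; [auto|]. split; [|split; [|split]].
  - intros i Hi. destruct i as [|[|[|i]]]; try lia; eauto.
  - unfold sg. destruct Pos as [h|[h|h]]; [exists a0; rewrite <- E0; split; auto; apply conv3_p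
    | exists a1; rewrite <- E1; split; auto; apply conv3_q | exists a2; rewrite <- E2; split; auto; apply conv3_r].
  - unfold sg. destruct Neg as [h|[h|h]]; [exists a0; rewrite <- E0; split; auto; apply conv3_p
    | exists a1; rewrite <- E1; split; auto; apply conv3_q | exists a2; rewrite <- E2; split; auto; apply conv3_r].
  - intros b fo g Hb HK.
    set (K := cross (psub (psi fo) (psi f)) d * cross (psub (psi fo) (psi f)) (psub (psi g) (psi f))) in *.
    unfold theta. fold S.
    destruct (excluded_middle_informative (S = b)) as [e|_]; [contradiction|].
    set (v := psi f) in *. set (o := psi fo). set (p := psi g).
    destruct (excluded_middle_informative (opp_side v o p (psi (bface S 0)))) as [h0|h0].
    + exists a0. rewrite E0 in *. apply opp_side_iff in h0. split; auto. rewrite psub_padd; auto.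
    + destruct (excluded_middle_informative (opp_side v o p (psi (bface S 1)))) as [h1|h1].
      * exists a1. rewrite E1 in *. apply opp_side_iff in h1. split; auto. rewrite psub_padd; auto.
      * exists a2. rewrite E0, E1, E2 in *. rewrite opp_side_iff in h0, h1. rewrite psub_padd. split; auto.
        assert (EK : cross (psub o v) d * cross (psub o v) (psub p v) = K) by reflexivity. rewrite EK in h0, h1. apply Rnot_lt_le in h0. apply Rnot_lt_le in h1.
        assert (K < 0 \/ 0 < K) by (destruct (Rtotal_order K 0) as [h|[h|h]]; auto; contradiction).
        destruct H as [hK|hK]; destruct Neg as [n|[n|n]]; destruct Pos as [q|[q|q]]; nra.
Qed.
End S.


Lemma cross_scale_l u a d : cross (pscale a d) u = a * cross d u.
Proof. destruct u, d; unfold cross, pscale; simpl; ring. Qed.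
Lemma cross_anti u v : cross v u = - cross u v.
Proof. destruct u, v; unfold cross; simpl; ring. Qed.

Lemma parallel u d : cross u d = 0 -> 0 < dot d d -> u = pscale (dot u d / dot d d) d.
Proof.
  destruct u as [u1 u2], d as [d1 d2]; unfold cross, dot, pscale; simpl; intros H Hd.
  f_equal; field_simplify_eq; try lra.
  - assert (u1*d2*d2 = u2*d1*d2) by (replace (u1*d2) with (u2*d1) by lra; ring). lra.
  - assert (u1*d2*d1 = u2*d1*d1) by (replace (u1*d2) with (u2*d1) by lra; ring). lra.
Qed.

Section S.
Variable psi : face -> pt.
Hypothesis TG : is_TGraph psi.

Lemma sg_self f : sg psi (int_seg psi f) (psi f).
Proof.
  destruct (int_seg_spec psi TG f) as [Hk _].
  destruct Hk as [e|[e|e]]; rewrite e; unfold sg.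
  - rewrite <- (bface_fnb f 0) at 4 by lia. apply conv3_p.
  - rewrite <- (bface_fnb f 1) at 4 by lia. apply conv3_q.
  - rewrite <- (bface_fnb f 2) at 4 by lia. apply conv3_r.
Qed.

Lemma theta_zero b f fo g : int_seg psi f = b -> theta psi b f fo g = 0.
Proof. intros e. unfold theta. destruct (excluded_middle_informative (int_seg psi f = b)); tauto. Qed.

Lemma no_overlap b b' v x y k : b <> b' -> sg psi b v -> sg psi b x -> sg psi b' v -> sg psi b' y ->
  psub x v = pscale k (psub y v) -> 0 < k -> 0 < dot (psub y v) (psub y v) -> False.
Proof.
  intros Hbb Hv Hx Hv' Hy E Hk Hd.
  destruct TG as [_ [_ [_ [_ [_ [_ HP]]]]]].
  set (s := 1 / (1 + k)). set (t := k / (1 + k)).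
  assert (Z1 : sg psi b (padd (pscale s x) (pscale (1 - s) v))) by (apply conv3_convex; auto; unfold s; split; apply Rmult_le_reg_r with (1+k); try lra; field_simplify; lra).
  assert (Z2 : sg psi b' (padd (pscale t y) (pscale (1 - t) v))) by (apply conv3_convex; auto; unfold t; split; apply Rmult_le_reg_r with (1+k); try lra; field_simplify; lra).
  assert (EZ : padd (pscale s x) (pscale (1 - s) v) = padd (pscale t y) (pscale (1 - t) v)).
  { destruct x as [x1 x2], y as [y1 y2], v as [v1 v2]. unfold psub, pscale, padd in *; simpl in *.
    injection E as e1 e2. unfold s, t. f_equal; field_simplify_eq; try lra; nra. }
  rewrite EZ in Z1.
  assert (h := HP b b' _ v Hbb Z1 Z2 Hv Hv').
  destruct y as [y1 y2], v as [v1 v2]. unfold psub, pscale, padd, dot in *; simpl in *.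
  injection h as h1 h2.
  assert (y1 - v1 = 0) by (unfold t in h1; apply Rmult_eq_reg_l with (k/(1+k)); [|apply Rgt_not_eq; apply Rdiv_lt_0_compat; lra]; field_simplify_eq; try lra; field_simplify_eq in h1; lra).
  assert (y2 - v2 = 0) by (unfold t in h2; apply Rmult_eq_reg_l with (k/(1+k)); [|apply Rgt_not_eq; apply Rdiv_lt_0_compat; lra]; field_simplify_eq; try lra; field_simplify_eq in h2; lra).
  rewrite H, H0 in Hd. lra.
Qed.

Lemma par_contra S b v P d : S <> b -> sg psi S v -> sg psi b v -> sg psi b P ->
  0 < dot (psub P v) (psub P v) -> cross (psub P v) d = 0 -> 0 < dot d d ->
  (exists a, a > 0 /\ sg psi S (padd v (pscale a d))) ->
  (exists a, a < 0 /\ sg psi S (padd v (pscale a d))) -> False.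
Proof.
  intros HS Hv Hv' HP HPd Hc Hd [ap [Hap Sp]] [an [Han Sn]].
  assert (E := parallel _ _ Hc Hd). set (k := dot (psub P v) d / dot d d) in *.
  assert (Hk : k <> 0) by (intro h; rewrite h in E; rewrite E in HPd; rewrite dot_scale in HPd; lra).
  destruct (Rtotal_order k 0) as [h|[h|h]]; [|contradiction|].
  - apply (no_overlap b S v P (padd v (pscale an d)) (k / an)); auto.
    + rewrite psub_padd, pscale_comp, E. f_equal. field. lra.
    + apply Rdiv_neg_neg; auto.
    + rewrite psub_padd, dot_scale. apply Rmult_lt_0_compat; [nra | auto].
  - apply (no_overlap b S v P (padd v (pscale ap d)) (k / ap)); auto.
    + rewrite psub_padd, pscale_comp, E. f_equal. field. lra.
    + apply Rdiv_lt_0_compat; auto.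
    + rewrite psub_padd, dot_scale. apply Rmult_lt_0_compat; [nra | auto].
Qed.

Lemma no_cone S w v P Q y : sg psi S v -> sg psi S y ->
  (forall z, oconv3 v P Q z -> tri_int psi w z) ->
  cross (psub P v) (psub Q v) <> 0 ->
  cross (psub y v) (psub Q v) * cross (psub P v) (psub Q v) > 0 ->
  cross (psub P v) (psub y v) * cross (psub P v) (psub Q v) > 0 -> False.
Proof.
  intros Hv Hy Htri Hc H1 H2.
  destruct TG as [_ [_ [_ [_ [_ [HS _]]]]]].
  set (c := cross (psub P v) (psub Q v)) in *.
  set (al := cross (psub y v) (psub Q v) / c). set (be := cross (psub P v) (psub y v) / c).
  assert (Hal : 0 < al) by (unfold al; replace (cross (psub y v) (psub Q v) / c) with ((cross (psub y v) (psub Q v) * c)/(c*c)) by (field; auto); apply Rdiv_lt_0_compat; [lra|]; apply Rsqr_pos_lt in Hc; unfold Rsqr in Hc; lra).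
  assert (Hbe : 0 < be) by (unfold be; replace (cross (psub P v) (psub y v) / c) with ((cross (psub P v) (psub y v) * c)/(c*c)) by (field; auto); apply Rdiv_lt_0_compat; [lra|]; apply Rsqr_pos_lt in Hc; unfold Rsqr in Hc; lra).
  set (t := 1 / (1 + al + be)).
  assert (Ht : 0 < t < 1).
  { unfold t; split; [apply Rdiv_lt_0_compat; lra|]. apply Rmult_lt_reg_r with (1+al+be); [lra|]. field_simplify; lra. }
  set (z := padd (pscale t y) (pscale (1 - t) v)).
  assert (Zs : sg psi S z) by (apply conv3_convex; auto; lra).
  apply (HS S w z Zs). apply Htri.
  exists (1 - t*al - t*be), (t*al), (t*be).
  assert (t*al + t*be < 1).
  { unfold t. apply Rmult_lt_reg_r with (1+al+be); [lra|]. field_simplify; lra. }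
  repeat split; try nra.
  unfold z, al, be, c. destruct y as [y1 y2], v as [v1 v2], P as [p1 p2], Q as [q1 q2].
  unfold padd, pscale, psub, cross in *; simpl in *. f_equal; field_simplify_eq; auto; ring.
Qed.
End S.


Section S.
Variable psi : face -> pt.
Hypothesis TG : is_TGraph psi.

Lemma WV_half V P Q bp bq : bp <> bq -> int_seg psi V = bp ->
  cross (psub (psi P) (psi V)) (psub (psi Q) (psi V)) <> 0 ->
  (psi P = psi (bface bp 0) \/ psi P = psi (bface bp 1) \/ psi P = psi (bface bp 2)) ->
  theta psi bp V P Q + theta psi bq V Q P = PI - uangle (psub (psi P) (psi V)) (psub (psi Q) (psi V)).
Proof.
  intros Hb HS Hc HP.
  rewrite theta_zero by auto.
  destruct (theta_spec psi TG V) as [d [Hd [Pts [_ [_ TH]]]]].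
  rewrite HS in Pts.
  assert (HaP : exists aP, psi P = padd (psi V) (pscale aP d)).
  { destruct HP as [e|[e|e]]; rewrite e; [apply Pts|apply Pts|apply Pts]; lia. }
  destruct HaP as [aP EP].
  set (r2 := psub (psi Q) (psi V)) in *.
  assert (Er1 : psub (psi P) (psi V) = pscale aP d) by (rewrite EP; apply psub_padd).
  rewrite Er1 in Hc |- *.
  destruct (cross_nz_dot _ _ Hc) as [D1 D2].
  rewrite cross_scale_l in Hc.
  assert (Hx : cross r2 d <> 0) by (intro h; rewrite cross_anti, h in Hc; apply Hc; ring).
  assert (HaP0 : aP <> 0) by (intro h; rewrite h in Hc; apply Hc; ring).
  assert (HK : cross r2 d * cross r2 (pscale aP d) <> 0).
  { rewrite cross_scale_r. intro h. apply Rmult_integral in h. destruct h as [h|h]; [auto|].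
    apply Rmult_integral in h; destruct h; auto. }
  destruct (TH bq Q P) as [a [Ha Eth]].
  { rewrite HS; auto. }
  { rewrite EP, psub_padd. fold r2. auto. }
  rewrite EP, psub_padd in Ha. fold r2 in Ha |- *. rewrite Eth.
  rewrite cross_scale_r in Ha.
  assert (X2 : 0 < cross r2 d * cross r2 d) by (apply Rsqr_pos_lt in Hx; unfold Rsqr in Hx; lra).
  assert (AA : a * aP < 0).
  { destruct (Rtotal_order (a*aP) 0) as [h|[h|h]]; auto.
    - exfalso. assert (a * (cross r2 d * (aP * cross r2 d)) = (a*aP) * (cross r2 d * cross r2 d)) by ring. rewrite h in H. lra.
    - exfalso. assert (a * (cross r2 d * (aP * cross r2 d)) = (a*aP) * (cross r2 d * cross r2 d)) by ring.
      assert (0 < (a*aP) * (cross r2 d * cross r2 d)) by (apply Rmult_lt_0_compat; auto). lra. }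
  replace (pscale a d) with (pscale (a / aP) (pscale aP d)) by (rewrite pscale_comp; f_equal; field; auto).
  rewrite uangle_scale_neg; auto.
  - fold r2. rewrite (uangle_sym r2). ring.
  - replace (a / aP) with ((a*aP) / (aP*aP)) by (field; auto). apply Rdiv_neg_pos; auto.
    apply Rsqr_pos_lt in HaP0; unfold Rsqr in HaP0; lra.
Qed.

Lemma WV_third w V P Q bp bq : int_seg psi V <> bp -> int_seg psi V <> bq ->
  cross (psub (psi P) (psi V)) (psub (psi Q) (psi V)) <> 0 ->
  sg psi bp (psi V) -> sg psi bp (psi P) -> sg psi bq (psi V) -> sg psi bq (psi Q) ->
  (forall z, oconv3 (psi V) (psi P) (psi Q) z -> tri_int psi w z) ->
  theta psi bp V P Q + theta psi bq V Q P = PI - uangle (psub (psi P) (psi V)) (psub (psi Q) (psi V)).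
Proof.
  intros H1 H2 Hc Vp Pp Vq Qq Htri.
  destruct (theta_spec psi TG V) as [d [Hd [Pts [[ap [Hap Sp]] [[an [Han Sn]] TH]]]]].
  set (S := int_seg psi V) in *.
  assert (Sv : sg psi S (psi V)) by (apply sg_self; auto).
  set (v := psi V) in *.
  set (r1 := psub (psi P) v) in *. set (r2 := psub (psi Q) v) in *.
  destruct (cross_nz_dot _ _ Hc) as [D1 D2].
  assert (X1 : cross r1 d <> 0).
  { intro h. apply (par_contra psi TG S bp v (psi P) d); eauto. }
  assert (X2 : cross r2 d <> 0).
  { intro h. apply (par_contra psi TG S bq v (psi Q) d); eauto. }
  assert (Hc' : cross r2 r1 <> 0) by (rewrite cross_anti; intro h; apply Hc; lra).
  destruct (TH bp P Q H1) as [a1 [Ha1 E1]].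
  { intro h. apply Rmult_integral in h. destruct h; auto. }
  destruct (TH bq Q P H2) as [a2 [Ha2 E2]].
  { intro h. apply Rmult_integral in h. destruct h; auto. }
  fold v r1 r2 in E1, E2, Ha1, Ha2. rewrite E1, E2.
  apply vlemma; auto.
  - intros [h1 h2]. apply (no_cone psi TG S w v (psi P) (psi Q) (padd v (pscale ap d))); auto.
    + fold r1 r2. rewrite psub_padd, cross_scale_l. assert (0 < ap * (cross d r2 * cross r1 r2)) by (apply Rmult_lt_0_compat; lra). lra.
    + fold r1 r2. rewrite psub_padd, cross_scale_r. assert (0 < ap * (cross r1 d * cross r1 r2)) by (apply Rmult_lt_0_compat; lra). lra.
  - intros [h1 h2]. apply (no_cone psi TG S w v (psi P) (psi Q) (padd v (pscale an d))); auto.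
    + fold r1 r2. rewrite psub_padd, cross_scale_l. assert (0 < (-an) * -(cross d r2 * cross r1 r2)) by (apply Rmult_lt_0_compat; lra). lra.
    + fold r1 r2. rewrite psub_padd, cross_scale_r. assert (0 < (-an) * -(cross r1 d * cross r1 r2)) by (apply Rmult_lt_0_compat; lra). lra.
  - rewrite Rmult_assoc; auto.
  - rewrite Rmult_assoc; auto.
Qed.

Lemma WV w V P Q bp bq : bp <> bq ->
  cross (psub (psi P) (psi V)) (psub (psi Q) (psi V)) <> 0 ->
  sg psi bp (psi V) -> sg psi bp (psi P) -> sg psi bq (psi V) -> sg psi bq (psi Q) ->
  (psi P = psi (bface bp 0) \/ psi P = psi (bface bp 1) \/ psi P = psi (bface bp 2)) ->
  (psi Q = psi (bface bq 0) \/ psi Q = psi (bface bq 1) \/ psi Q = psi (bface bq 2)) ->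
  (forall z, oconv3 (psi V) (psi P) (psi Q) z -> tri_int psi w z) ->
  theta psi bp V P Q + theta psi bq V Q P = PI - uangle (psub (psi P) (psi V)) (psub (psi Q) (psi V)).
Proof.
  intros Hb Hc Vp Pp Vq Qq HP HQ Htri.
  destruct (excluded_middle_informative (int_seg psi V = bp)) as [e|n1].
  - apply WV_half; auto.
  - destruct (excluded_middle_informative (int_seg psi V = bq)) as [e|n2].
    + rewrite Rplus_comm, uangle_sym. apply WV_half; auto.
      rewrite cross_anti. intro h; apply Hc; lra.
    + eapply WV_third; eauto.
Qed.
End S.

Lemma sg_pt psi b k : (k < 3)%nat -> sg psi b (psi (bface b k)).
Proof.
  intros Hk. unfold sg. destruct k as [|[|[|k]]]; try lia; [apply conv3_p|apply conv3_q|apply conv3_r].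
Qed.

Lemma cross_cyc A B C : cross (psub C B) (psub A B) = cross (psub B A) (psub C A).
Proof. destruct A, B, C; unfold cross, psub; simpl; ring. Qed.

Theorem white_sum psi (TG : is_TGraph psi) (w : white) :
  phi_ref psi w 0 + phi_ref psi w 1 + phi_ref psi w 2 = 1.
Proof.
  destruct w as [i j].
  assert (ND : cross (psub (psi ((i+1)%Z, j)) (psi (i, j))) (psub (psi (i, (j+1)%Z)) (psi (i, j))) <> 0).
  { destruct TG as [[d0 [d1 [d2 [_ H]]]] _]. destruct (H (i,j)) as [h _]. exact h. }
  set (A := (i, j)). set (B := ((i+1)%Z, j)). set (C := (i, (j+1)%Z)).
  set (b0 := (i, j) : black). set (b1 := (i, (j-1)%Z) : black). set (b2 := ((i-1)%Z, j) : black).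
  assert (e00 : bface b0 0 = B) by reflexivity.
  assert (e01 : bface b0 1 = C) by reflexivity.
  assert (e11 : bface b1 1 = A) by (unfold b1, A, bface; cbv beta iota; f_equal; lia).
  assert (e12 : bface b1 2 = B) by (unfold b1, B, bface; cbv beta iota; f_equal; lia).
  assert (e20 : bface b2 0 = A) by (unfold b2, A, bface; cbv beta iota; f_equal; lia).
  assert (e21 : bface b2 2 = C) by (unfold b2, C, bface; cbv beta iota; f_equal; lia).
  assert (sgA1 : sg psi b1 (psi A)) by (rewrite <- e11; apply sg_pt; lia).
  assert (sgB1 : sg psi b1 (psi B)) by (rewrite <- e12; apply sg_pt; lia).
  assert (sgA2 : sg psi b2 (psi A)) by (rewrite <- e20; apply sg_pt; lia).
  assert (sgC2 : sg psi b2 (psi C)) by (rewrite <- e21; apply sg_pt; lia).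
  assert (sgB0 : sg psi b0 (psi B)) by (rewrite <- e00; apply sg_pt; lia).
  assert (sgC0 : sg psi b0 (psi C)) by (rewrite <- e01; apply sg_pt; lia).
  assert (n12 : b1 <> b2) by (unfold b1, b2; intro h; injection h; lia).
  assert (n01 : b0 <> b1) by (unfold b0, b1; intro h; injection h; lia).
  assert (n20 : b2 <> b0) by (unfold b2, b0; intro h; injection h; lia).
  assert (VA := WV psi TG (i,j) A B C b1 b2 n12 ND sgA1 sgB1 sgA2 sgC2
     ltac:(rewrite e12; auto) ltac:(rewrite e21; auto) ltac:(intros z hz; exact hz)).
  assert (VB := WV psi TG (i,j) B C A b0 b1 n01 ltac:(rewrite cross_cyc; auto) sgB0 sgC0 sgB1 sgA1
     ltac:(rewrite e01; auto) ltac:(rewrite e11; auto)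
     ltac:(intros z hz; apply oconv3_swap12, oconv3_swap23; exact hz)).
  assert (VC := WV psi TG (i,j) C A B b2 b0 n20 ltac:(rewrite (cross_cyc (psi B) (psi C) (psi A)), cross_cyc; auto) sgC2 sgA2 sgC0 sgB0
     ltac:(rewrite e20; auto) ltac:(rewrite e00; auto)
     ltac:(intros z hz; apply oconv3_swap23, oconv3_swap12; exact hz)).
  assert (TS := tri_sum (psi A) (psi B) (psi C) ND).
  rewrite (uangle_sym (psub (psi C) (psi B))) in VB.
  unfold phi_ref. simpl.
  subst A B C b0 b1 b2.
  assert (PI > 0) by apply PI_RGT_0.
  field_simplify_eq; [|lra].
  lra.
Qed.


Lemma opp_core (r1 r2 q1 q2 s1 s2 m : R) : 0 < m < 1 ->
  (r1*q2 - r2*q1) * (r1*s2 - r2*s1) > 0 ->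
  exists b t b' t', 0 < b /\ 0 < t /\ b + t < 1 /\ 0 < b' /\ 0 < t' /\ b' + t' < 1 /\
    b*m*r1 + t*q1 = b'*r1 + t'*s1 /\ b*m*r2 + t*q2 = b'*r2 + t'*s2.
Proof.
  intros Hm Hp.
  set (c := r1*q2 - r2*q1) in *. set (c' := r1*s2 - r2*s1) in *.
  assert (Hc : c <> 0) by (intro h; rewrite h in Hp; lra).
  set (be := (s1*q2 - s2*q1)/c). set (ga := c'/c).
  assert (Hga : 0 < ga) by (unfold ga; replace (c'/c) with ((c*c')/(c*c)) by (field; auto);
    apply Rdiv_lt_0_compat; auto; apply Rsqr_pos_lt in Hc; unfold Rsqr in Hc; lra).
  assert (S1 : s1 = be*r1 + ga*q1) by (unfold be, ga, c, c' in *; field_simplify_eq; auto; ring).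
  assert (S2 : s2 = be*r2 + ga*q2) by (unfold be, ga, c, c' in *; field_simplify_eq; auto; ring).
  clearbody be ga.
  set (K := 1 + Rabs be + ga).
  assert (HK : 0 < K) by (unfold K; pose proof (Rabs_pos be); lra).
  assert (Hb : - K < be < K) by (unfold K; split; [pose proof (Rabs_pos be); pose proof (Rle_abs (-be)); rewrite Rabs_Ropp in *; lra | pose proof (Rle_abs be); lra]).
  set (ep := m / (4*K)).
  assert (Hep : 0 < ep) by (unfold ep; apply Rdiv_lt_0_compat; lra).
  exists (1/2 + ep*be/m), (ep*ga), (m/2), ep.
  assert (E1 : ep * be / m = be / (4*K)) by (unfold ep; field; lra).
  assert (E2 : ep * ga = m * (ga / (4*K))) by (unfold ep; field; lra).
  assert (B1 : - 1/4 < be / (4*K) < 1/4).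
  { split; [apply Rmult_lt_reg_r with (4*K)|apply Rmult_lt_reg_r with (4*K)]; try lra; field_simplify; lra. }
  assert (B2 : 0 < ga / (4*K) < 1/4).
  { split; [apply Rdiv_lt_0_compat; lra|]. apply Rmult_lt_reg_r with (4*K); try lra; field_simplify; unfold K; pose proof (Rabs_pos be); lra. }
  assert (B3 : be / (4*K) + ga / (4*K) < 1/2).
  { replace (be / (4*K) + ga / (4*K)) with ((be + ga)/(4*K)) by (field; lra).
    assert (be + ga < 2*K) by (unfold K; pose proof (Rle_abs be); pose proof (Rabs_pos be); lra).
    apply Rmult_lt_reg_r with (4*K); [lra|]. unfold Rdiv; rewrite Rmult_assoc, Rinv_l; lra. }
  assert (K1 : 1 < K) by (unfold K; pose proof (Rabs_pos be); lra).
  assert (ep < 1/4) by (unfold ep; apply Rmult_lt_reg_r with (4*K); [lra|]; unfold Rdiv; rewrite Rmult_assoc, Rinv_l; lra).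
  rewrite E1, E2.
  repeat split; try lra; try nra.
  - rewrite S1. unfold ep. field. lra.
  - rewrite S2. unfold ep. field. lra.
Qed.

Lemma opp_sides E G H pg ph m : psub G E = pscale m (psub H E) -> 0 < m < 1 ->
  cross (psub H E) (psub pg E) * cross (psub H E) (psub ph E) > 0 ->
  exists z, oconv3 E G pg z /\ oconv3 E H ph z.
Proof.
  intros EG Hm Hp.
  destruct E as [e1 e2], G as [g1 g2], H as [h1 h2], pg as [p1 p2], ph as [q1 q2].
  unfold psub, pscale, cross in *; simpl in *. injection EG as EG1 EG2.
  destruct (opp_core (h1-e1) (h2-e2) (p1-e1) (p2-e2) (q1-e1) (q2-e2) m Hm Hp)
    as [b [t [b' [t' [Hb [Ht [Hbt [Hb' [Ht' [Hbt' [Z1 Z2]]]]]]]]]]].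
  exists (e1 + b'*(h1-e1) + t'*(q1-e1), e2 + b'*(h2-e2) + t'*(q2-e2)). split.
  - exists (1 - b - t), b, t. repeat split; try lra.
    unfold padd, pscale; simpl. f_equal; nra.
  - exists (1 - b' - t'), b', t'. repeat split; try lra.
    unfold padd, pscale; simpl. f_equal; nra.
Qed.


Lemma uangle_scale_pos_l u v l : 0 < dot u u -> 0 < dot v v -> 0 < l ->
  uangle (pscale l u) v = uangle u v.
Proof. intros. rewrite uangle_sym, uangle_scale_pos, uangle_sym; auto. Qed.

Lemma sq_pos x : x <> 0 -> 0 < x * x.
Proof. intros h; apply Rsqr_pos_lt in h; unfold Rsqr in h; lra. Qed.

Lemma pscale_one x : x = pscale 1 x.
Proof. destruct x; unfold pscale; simpl; f_equal; ring. Qed.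

Section S.
Variable psi : face -> pt.
Hypothesis TG : is_TGraph psi.

Lemma BV_end b E G H pg ph wg wh s :
  wg <> wh -> int_seg psi E <> b ->
  psub (psi G) (psi E) = pscale s (psub (psi H) (psi E)) -> 0 < s -> s <> 1 ->
  sg psi b (psi E) -> sg psi b (psi H) ->
  cross (psub (psi G) (psi E)) (psub (psi pg) (psi E)) <> 0 ->
  cross (psub (psi H) (psi E)) (psub (psi ph) (psi E)) <> 0 ->
  (forall z, oconv3 (psi E) (psi G) (psi pg) z -> tri_int psi wg z) ->
  (forall z, oconv3 (psi E) (psi H) (psi ph) z -> tri_int psi wh z) ->
  theta psi b E G pg + theta psi b E H ph = PI.
Proof.
  intros Hw HS EG Hs Hs1 Eb Hb Ng Nh Tg Th.
  assert (Hwh := TG). destruct Hwh as [_ [_ [_ [_ [HW _]]]]].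
  set (v := psi E) in *. set (r := psub (psi H) v) in *.
  set (qg := psub (psi pg) v) in *. set (qh := psub (psi ph) v) in *.
  assert (Cg0 : cross (psub (psi G) v) qg = s * cross r qg) by (rewrite EG, cross_scale_l; auto).
  assert (Cg : cross r qg <> 0) by (intro h; apply Ng; rewrite Cg0, h; ring).
  destruct (cross_nz_dot _ _ Nh) as [Dr Dqh].
  assert (OPP : cross r qg * cross r qh < 0).
  { destruct (Rtotal_order (cross r qg * cross r qh) 0) as [h|[h|h]]; auto; exfalso.
    - apply Rmult_integral in h; destruct h; auto.
    - destruct (Rtotal_order s 1) as [h1|[h1|h1]]; [|contradiction|].
      + destruct (opp_sides v (psi G) (psi H) (psi pg) (psi ph) s EG (conj Hs h1)) as [z [z1 z2]]; [fold r qg qh; lra|].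
        eapply HW; [exact Hw | apply Tg; exact z1 | apply Th; exact z2].
      + assert (EH : psub (psi H) v = pscale (1/s) (psub (psi G) v)) by (rewrite EG, pscale_comp; replace (1/s*s) with 1 by (field; lra); apply pscale_one).
        destruct (opp_sides v (psi H) (psi G) (psi ph) (psi pg) (1/s) EH) as [z [z1 z2]].
        * split; [apply Rdiv_lt_0_compat; lra|]. apply Rmult_lt_reg_r with s; [lra|]. field_simplify; lra.
        * fold qg qh. rewrite EG, !cross_scale_l. fold r.
          assert (0 < s*s) by nra. assert (0 < (s*s) * (cross r qg * cross r qh)) by (apply Rmult_lt_0_compat; auto). nra.
        * eapply HW; [exact Hw | apply Tg; exact z2 | apply Th; exact z1]. }
  destruct (theta_spec psi TG E) as [d [Hd [Pts [[ap [Hap Sp]] [[an [Han Sn]] TH]]]]].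
  fold v in Pts, Sp, Sn, TH.
  assert (Sv : sg psi (int_seg psi E) v) by (apply sg_self; auto).
  assert (X : cross r d <> 0).
  { intro h. apply (par_contra psi TG (int_seg psi E) b v (psi H) d); eauto. }
  destruct (TH b G pg HS) as [a1 [Ha1 E1]].
  { fold qg. rewrite Cg0, EG. fold r. rewrite cross_scale_l.
    assert (0 < s*s) by nra. intro h.
    assert (h' : (s*s) * (cross r d * cross r qg) = 0) by (rewrite <- h; ring).
    apply Rmult_integral in h'; destruct h' as [h'|h']; [lra|]. apply Rmult_integral in h'; destruct h'; auto. }
  destruct (TH b H ph HS) as [a2 [Ha2 E2]].
  { fold r qh. intro h. apply Rmult_integral in h; destruct h; auto. }
  fold qg qh r in Ha1, Ha2, E1, E2. rewrite E1, E2.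
  rewrite Cg0, EG in Ha1. fold r in Ha1. rewrite cross_scale_l in Ha1.
  assert (A12 : a1 * a2 < 0).
  { assert (P1 : 0 < (a1 * (s * cross r d * (s * cross r qg))) * (a2 * (cross r d * cross r qh))).
    { assert (U := Rmult_lt_0_compat _ _ (Ropp_0_gt_lt_contravar _ Ha1) (Ropp_0_gt_lt_contravar _ Ha2)). nra. }
    assert (Q : (a1 * (s * cross r d * (s * cross r qg))) * (a2 * (cross r d * cross r qh))
       = (a1*a2) * ((s*s) * (cross r d * cross r d)) * (cross r qg * cross r qh)) by ring.
    rewrite Q in P1.
    assert (P2 : 0 < (s*s) * (cross r d * cross r d)) by (apply Rmult_lt_0_compat; [nra|apply sq_pos; auto]).
    destruct (Rtotal_order (a1*a2) 0) as [h|[h|h]]; auto; exfalso.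
    - rewrite h in P1. lra.
    - assert (0 < (a1*a2) * ((s*s) * (cross r d * cross r d))) by (apply Rmult_lt_0_compat; auto). nra. }
  assert (a2 <> 0) by (intro h; rewrite h in A12; lra).
  assert (a1 <> 0) by (intro h; rewrite h in A12; lra).
  rewrite EG. fold r. rewrite uangle_scale_pos_l; auto.
  2:{ rewrite dot_scale. apply Rmult_lt_0_compat; auto. apply sq_pos. auto. }
  assert (Da2 : 0 < dot (pscale a2 d) (pscale a2 d)) by (rewrite dot_scale; apply Rmult_lt_0_compat; auto; apply sq_pos; auto).
  replace (pscale a1 d) with (pscale (a1/a2) (pscale a2 d)) by (rewrite pscale_comp; f_equal; field; auto).
  rewrite uangle_scale_neg; auto.
  - ring.
  - replace (a1/a2) with ((a1*a2)/(a2*a2)) by (field; auto). apply Rdiv_neg_pos; auto. apply sq_pos; auto.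
Qed.
End S.


Lemma endpoint_not_int v Q1 Q2 s : psub Q1 v = pscale s (psub Q2 v) -> 0 < s ->
  0 < dot (psub Q2 v) (psub Q2 v) -> ~ in_interior (conv3 v Q1 Q2) v.
Proof.
  intros E Hs Hd Hi. destruct (core_interior _ _ _ Hi) as [_ [tau [Ht E']]].
  rewrite E in E'. destruct (psub Q2 v) as [d1 d2]. unfold pscale, dot in *; simpl in *.
  injection E' as e1 e2.
  assert (d1 = 0) by (apply (Rmult_eq_reg_l (s + tau)); lra).
  assert (d2 = 0) by (apply (Rmult_eq_reg_l (s + tau)); lra). subst. lra.
Qed.

Lemma mid_int (X : pt -> Prop) x y v t : x <> y -> X x -> X y -> 0 < t < 1 ->
  v = padd (pscale t x) (pscale (1 - t) y) -> in_interior X v.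
Proof. intros. exists x, y. repeat split; auto. exists t. auto. Qed.

Lemma nd_all p q r : cross (psub q p) (psub r p) <> 0 ->
  cross (psub r p) (psub q p) <> 0 /\ cross (psub p q) (psub r q) <> 0 /\
  cross (psub r q) (psub p q) <> 0 /\ cross (psub p r) (psub q r) <> 0 /\ cross (psub q r) (psub p r) <> 0.
Proof.
  intros H.
  assert (E1 : cross (psub r p) (psub q p) = - cross (psub q p) (psub r p)) by (destruct p, q, r; unfold cross, psub; simpl; ring).
  assert (E2 : cross (psub p q) (psub r q) = - cross (psub q p) (psub r p)) by (destruct p, q, r; unfold cross, psub; simpl; ring).
  assert (E3 : cross (psub r q) (psub p q) = cross (psub q p) (psub r p)) by (destruct p, q, r; unfold cross, psub; simpl; ring).
  assert (E4 : cross (psub p r) (psub q r) = cross (psub q p) (psub r p)) by (destruct p, q, r; unfold cross, psub; simpl; ring).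
  assert (E5 : cross (psub q r) (psub p r) = - cross (psub q p) (psub r p)) by (destruct p, q, r; unfold cross, psub; simpl; ring).
  rewrite E1, E2, E3, E4, E5. repeat split; intro h; apply H; lra.
Qed.

Lemma lin_rel P0 P1 P2 l : psub P1 P0 = pscale l (psub P2 P0) ->
  psub P2 P1 = pscale (1 - l) (psub P2 P0) /\ psub P0 P1 = pscale (- l) (psub P2 P0) /\
  psub P0 P2 = pscale (-1) (psub P2 P0) /\ psub P1 P2 = pscale (l - 1) (psub P2 P0).
Proof.
  destruct P0, P1, P2; unfold psub, pscale; simpl; intros E; injection E as e1 e2.
  repeat split; f_equal; lra.
Qed.

Lemma rel_div X Y Z D a c : psub X Y = pscale a D -> psub Z Y = pscale c D -> c <> 0 ->
  psub X Y = pscale (a / c) (psub Z Y).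
Proof. intros E1 E2 Hc. rewrite E1, E2, pscale_comp. f_equal. field. auto. Qed.

Lemma dot_pscale_pos a D : a <> 0 -> 0 < dot D D -> 0 < dot (pscale a D) (pscale a D).
Proof. intros. rewrite dot_scale. apply Rmult_lt_0_compat; auto. apply sq_pos; auto. Qed.

Ltac operm := first [ assumption | apply oconv3_swap12; assumption | apply oconv3_swap23; assumption
  | apply oconv3_swap12, oconv3_swap23; assumption | apply oconv3_swap23, oconv3_swap12; assumption
  | apply oconv3_swap12, oconv3_swap23, oconv3_swap12; assumption ].
Ltac cperm := first [ assumption | apply conv3_swap12; assumption | apply conv3_swap23; assumption
  | apply conv3_swap12, conv3_swap23; assumption | apply conv3_swap23, conv3_swap12; assumption
  | apply conv3_swap12, conv3_swap23, conv3_swap12; assumption ].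

Section S.
Variable psi : face -> pt.
Hypothesis TG : is_TGraph psi.

Lemma BV_end' b E G H pg ph wg wh s :
  wg <> wh -> (forall z, sg psi b z -> conv3 (psi E) (psi G) (psi H) z) ->
  psub (psi G) (psi E) = pscale s (psub (psi H) (psi E)) -> 0 < s -> s <> 1 ->
  sg psi b (psi E) -> sg psi b (psi H) ->
  cross (psub (psi G) (psi E)) (psub (psi pg) (psi E)) <> 0 ->
  cross (psub (psi H) (psi E)) (psub (psi ph) (psi E)) <> 0 ->
  (forall z, oconv3 (psi E) (psi G) (psi pg) z -> tri_int psi wg z) ->
  (forall z, oconv3 (psi E) (psi H) (psi ph) z -> tri_int psi wh z) ->
  theta psi b E G pg + theta psi b E H ph = PI.
Proof.
  intros Hw Hsub EG Hs Hs1 Eb Hb Ng Nh Tg Th.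
  apply (BV_end psi TG b E G H pg ph wg wh s); auto.
  intro e. destruct (int_seg_spec psi TG E) as [_ [Hi _]]. rewrite e in Hi.
  apply (endpoint_not_int (psi E) (psi G) (psi H) s EG Hs).
  - destruct (cross_nz_dot _ _ Nh); auto.
  - eapply in_interior_mono; [exact Hsub|exact Hi].
Qed.

Lemma BV_mid b M k G H pg ph : (k < 3)%nat -> fnb M k = b -> in_interior (sg psi b) (psi M) ->
  theta psi b M G pg + theta psi b M H ph = 0.
Proof.
  intros Hk e Hi. destruct (int_seg_spec psi TG M) as [_ [_ U]].
  rewrite <- e in Hi. assert (e' := U k Hk Hi). rewrite e in e'.
  rewrite !theta_zero by auto. ring.
Qed.
End S.

Lemma mid0 P0 P1 P2 l : psub P1 P0 = pscale l (psub P2 P0) -> l < 0 ->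
  P0 = padd (pscale (1/(1-l)) P1) (pscale (1 - 1/(1-l)) P2).
Proof.
  destruct P0, P1, P2; unfold psub, pscale, padd; simpl; intros E Hl; injection E as e1 e2.
  f_equal; field_simplify_eq; try lra; nra.
Qed.
Lemma mid1 P0 P1 P2 l : psub P1 P0 = pscale l (psub P2 P0) ->
  P1 = padd (pscale l P2) (pscale (1 - l) P0).
Proof.
  destruct P0, P1, P2; unfold psub, pscale, padd; simpl; intros E; injection E as e1 e2.
  f_equal; lra.
Qed.
Lemma mid2 P0 P1 P2 l : psub P1 P0 = pscale l (psub P2 P0) -> 1 < l ->
  P2 = padd (pscale (1/l) P1) (pscale (1 - 1/l) P0).
Proof.
  destruct P0, P1, P2; unfold psub, pscale, padd; simpl; intros E Hl; injection E as e1 e2.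
  f_equal; field_simplify_eq; try lra; nra.
Qed.
Lemma neq_of_dot a b : 0 < dot (psub a b) (psub a b) -> a <> b.
Proof. intros H e; subst. destruct b; unfold dot, psub in H; simpl in H. lra. Qed.
Lemma dot_zero_scale D : dot (pscale 0 D) (pscale 0 D) = 0.
Proof. rewrite dot_scale. ring. Qed.
Lemma inv_b1 l : l < 0 -> 0 < 1/(1-l) < 1.
Proof. intros. split; [apply Rdiv_lt_0_compat; lra|]. apply Rmult_lt_reg_r with (1-l); [lra|]. field_simplify; lra. Qed.
Lemma inv_b2 l : 1 < l -> 0 < 1/l < 1.
Proof. intros. split; [apply Rdiv_lt_0_compat; lra|]. apply Rmult_lt_reg_r with l; [lra|]. field_simplify; lra. Qed.
Lemma s_b1 l : (l < 0 \/ 1 < l) -> 0 < - l / (1 - l).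
Proof. intros [h|h]; [apply Rdiv_lt_0_compat; lra|]. replace (-l/(1-l)) with (l/(l-1)) by (field; lra). apply Rdiv_lt_0_compat; lra. Qed.
Lemma s_b2 l : l <> 0 -> l <> 1 -> - l / (1 - l) <> 1.
Proof. intros h0 h1 h. apply (Rmult_eq_compat_r (1-l)) in h. unfold Rdiv in h. rewrite Rmult_assoc, Rinv_l in h by lra. lra. Qed.
Lemma s_b3 l : (l - 1) / (-1) = 1 - l.
Proof. field. Qed.
Lemma sub_nz l : l <> 1 -> 1 - l <> 0.
Proof. intros h e; apply h; lra. Qed.
Lemma one_sub_pos l : l < 1 -> 0 < 1 - l.
Proof. intros; lra. Qed.
Lemma one_sub_ne1 l : l <> 0 -> 1 - l <> 1.
Proof. intros h e; apply h; lra. Qed.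


Theorem black_sum psi (TG : is_TGraph psi) (b : black) :
  phi_ref_bw psi b 0 + phi_ref_bw psi b 1 + phi_ref_bw psi b 2 = -1.
Proof.
  destruct b as [i j].
  unfold phi_ref_bw, phi_ref, bnbW, bnbK. cbn [wnb efst esnd ethird].
  replace (j + 1 - 1)%Z with j by lia. replace (i + 1 - 1)%Z with i by lia.
  assert (ND0 : cross (psub (psi ((i+1)%Z, j)) (psi (i, j))) (psub (psi (i, (j+1)%Z)) (psi (i, j))) <> 0).
  { destruct TG as [[d0 [d1 [d2 [_ H]]]] _]. destruct (H (i,j)) as [h _]. exact h. }
  assert (ND1 : cross (psub (psi ((i+1)%Z, (j+1)%Z)) (psi (i, (j+1)%Z))) (psub (psi (i, (j+1+1)%Z)) (psi (i, (j+1)%Z))) <> 0).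
  { destruct TG as [[d0 [d1 [d2 [_ H]]]] _]. destruct (H (i,(j+1)%Z)) as [h _]. exact h. }
  assert (ND2 : cross (psub (psi ((i+1+1)%Z, j)) (psi ((i+1)%Z, j))) (psub (psi ((i+1)%Z, (j+1)%Z)) (psi ((i+1)%Z, j))) <> 0).
  { destruct TG as [[d0 [d1 [d2 [_ H]]]] _]. destruct (H ((i+1)%Z,j)) as [h _]. exact h. }
  assert (Hcol : cross (psub (psi (i, (j+1)%Z)) (psi ((i+1)%Z, j))) (psub (psi ((i+1)%Z, (j+1)%Z)) (psi ((i+1)%Z, j))) = 0).
  { destruct TG as [_ [HB _]]. destruct (HB (i,j)) as [h _]. exact h. }
  assert (Tri0 : forall z, oconv3 (psi (i,j)) (psi ((i+1)%Z, j)) (psi (i, (j+1)%Z)) z -> tri_int psi (i,j) z)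
    by (intros z hz; exact hz).
  assert (Tri1 : forall z, oconv3 (psi (i,(j+1)%Z)) (psi ((i+1)%Z, (j+1)%Z)) (psi (i, (j+1+1)%Z)) z -> tri_int psi (i,(j+1)%Z) z)
    by (intros z hz; exact hz).
  assert (Tri2 : forall z, oconv3 (psi ((i+1)%Z,j)) (psi ((i+1+1)%Z, j)) (psi ((i+1)%Z, (j+1)%Z)) z -> tri_int psi ((i+1)%Z,j) z)
    by (intros z hz; exact hz).
  assert (Sg : forall z, sg psi (i,j) z -> conv3 (psi ((i+1)%Z,j)) (psi (i,(j+1)%Z)) (psi ((i+1)%Z,(j+1)%Z)) z)
    by (intros z hz; exact hz).
  assert (sg0 : sg psi (i,j) (psi ((i+1)%Z,j))) by (apply (sg_pt psi (i,j) 0); lia).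
  assert (sg1 : sg psi (i,j) (psi (i,(j+1)%Z))) by (apply (sg_pt psi (i,j) 1); lia).
  assert (sg2 : sg psi (i,j) (psi ((i+1)%Z,(j+1)%Z))) by (apply (sg_pt psi (i,j) 2); lia).
  assert (w01 : ((i,j) : white) <> (i,(j+1)%Z)) by (intro h; injection h; lia).
  assert (w02 : ((i,j) : white) <> ((i+1)%Z,j)) by (intro h; injection h; lia).
  assert (w12 : ((i,(j+1)%Z) : white) <> ((i+1)%Z,j)) by (intro h; injection h; lia).
  set (F0 := ((i+1)%Z, j)) in *. set (F1 := (i, (j+1)%Z)) in *. set (F2 := ((i+1)%Z, (j+1)%Z)) in *.
  set (T1 := (i, (j+1+1)%Z)) in *. set (T2 := ((i+1+1)%Z, j)) in *. set (T0 := (i, j)) in *.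
  destruct (nd_all _ _ _ ND0) as [N0a [N0b [N0c [N0d N0e]]]].
  destruct (nd_all _ _ _ ND1) as [N1a [N1b [N1c [N1d N1e]]]].
  destruct (nd_all _ _ _ ND2) as [N2a [N2b [N2c [N2d N2e]]]].
  set (P0 := psi F0) in *. set (P1 := psi F1) in *. set (P2 := psi F2) in *.
  set (D := psub P2 P0) in *.
  assert (HD : 0 < dot D D) by (destruct (cross_nz_dot _ _ N2a); auto).
  destruct (cross_nz_dot _ _ N0c) as [HD10 _].
  destruct (cross_nz_dot _ _ ND1) as [HD21 _].
  destruct (cross_nz_dot _ _ N2d) as [HD02 _].
  assert (EL := parallel _ _ Hcol HD). set (l := dot (psub P1 P0) D / dot D D) in EL. clearbody l.
  destruct (lin_rel _ _ _ _ EL) as [R1 [R2 [R3 R4]]]. fold D in R1, R2, R3, R4.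
  assert (l0 : l <> 0) by (intro h; rewrite EL, h in HD10; rewrite dot_zero_scale in HD10; lra).
  assert (l1 : l <> 1) by (intro h; rewrite h in R1; rewrite R1 in HD21; replace (1-1) with 0 in HD21 by ring; rewrite dot_zero_scale in HD21; lra).
  assert (n10 := neq_of_dot _ _ HD10). assert (n21 := neq_of_dot _ _ HD21). assert (n02 := neq_of_dot _ _ HD02).
  assert (PI > 0) by apply PI_RGT_0.
  set (V0 := theta psi T0 F0 F1 T0 + theta psi T0 F0 F2 T2).
  set (V1 := theta psi T0 F1 F0 T0 + theta psi T0 F1 F2 T1).
  set (V2 := theta psi T0 F2 F1 T1 + theta psi T0 F2 F0 T2).
  assert (V0e : 0 < l -> V0 = PI).
  { intros hl. unfold V0.
    apply (BV_end' psi TG T0 F0 F1 F2 T0 T2 T0 F0 l w02); [ | exact EL | exact hl | exact l1 | exact sg0 | exact sg2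
      | exact N0c | exact N2a | | ].
    - intros z hz. apply Sg in hz. exact hz.
    - intros z hz. apply Tri0. apply oconv3_swap12, oconv3_swap23. exact hz.
    - intros z hz. apply Tri2. apply oconv3_swap23. exact hz. }
  assert (V0m : l < 0 -> V0 = 0).
  { intros hl. unfold V0. apply (BV_mid psi TG T0 F0 0); [lia|unfold F0, T0; simpl; f_equal; lia|].
    apply (mid_int _ P1 P2 P0 (1/(1-l))).
    - intro e; apply n21; symmetry; exact e.
    - exact sg1.
    - exact sg2.
    - apply inv_b1; exact hl.
    - apply mid0; [exact EL|exact hl]. }
  assert (V1e : l < 0 \/ 1 < l -> V1 = PI).
  { intros hl. unfold V1.
    assert (Hs : 0 < - l / (1 - l)) by (apply s_b1; exact hl).
    assert (Hs1 := s_b2 l l0 l1).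
    assert (l1' := sub_nz l l1).
    apply (BV_end' psi TG T0 F1 F0 F2 T0 T1 T0 F1 (- l / (1 - l)) w01);
      [ | exact (rel_div _ _ _ D _ _ R2 R1 l1') | exact Hs | exact Hs1 | exact sg1 | exact sg2
      | exact N0e | exact ND1 | | ].
    - intros z hz. apply Sg in hz. apply conv3_swap12. exact hz.
    - intros z hz. apply Tri0. apply oconv3_swap12, oconv3_swap23, oconv3_swap12. exact hz.
    - intros z hz. apply Tri1. exact hz. }
  assert (V1m : 0 < l < 1 -> V1 = 0).
  { intros hl. unfold V1. apply (BV_mid psi TG T0 F1 1); [lia|unfold F1, T0; simpl; f_equal; lia|].
    apply (mid_int _ P2 P0 P1 l).
    - intro e; apply n02; symmetry; exact e.
    - exact sg2.
    - exact sg0.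
    - exact hl.
    - apply mid1; exact EL. }
  assert (V2e : l < 1 -> V2 = PI).
  { intros hl. unfold V2.
    assert (Hs : 0 < (l - 1) / (-1)) by (rewrite s_b3; apply one_sub_pos; exact hl).
    assert (Hs1 : (l-1)/(-1) <> 1) by (rewrite s_b3; apply one_sub_ne1; exact l0).
    assert (m1 : -1 <> 0) by (apply Ropp_neq_0_compat, R1_neq_R0).
    apply (BV_end' psi TG T0 F2 F1 F0 T1 T2 F1 F0 ((l - 1) / (-1)) w12);
      [ | exact (rel_div _ _ _ D _ _ R4 R3 m1) | exact Hs | exact Hs1 | exact sg2 | exact sg0
      | exact N1b | exact N2d | | ].
    - intros z hz. apply Sg in hz. apply conv3_swap12, conv3_swap23, conv3_swap12. exact hz.
    - intros z hz. apply Tri1. apply oconv3_swap12. exact hz.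
    - intros z hz. apply Tri2. apply oconv3_swap23, oconv3_swap12. exact hz. }
  assert (V2m : 1 < l -> V2 = 0).
  { intros hl. unfold V2. apply (BV_mid psi TG T0 F2 2); [lia|unfold F2, T0; simpl; f_equal; lia|].
    apply (mid_int _ P1 P0 P2 (1/l)).
    - exact n10.
    - exact sg1.
    - exact sg0.
    - apply inv_b2; exact hl.
    - apply mid2; [exact EL|exact hl]. }
  assert (EV0 : V0 = theta psi T0 F0 F1 T0 + theta psi T0 F0 F2 T2) by reflexivity.
  assert (EV1 : V1 = theta psi T0 F1 F0 T0 + theta psi T0 F1 F2 T1) by reflexivity.
  assert (EV2 : V2 = theta psi T0 F2 F1 T1 + theta psi T0 F2 F0 T2) by reflexivity.
  clearbody V0 V1 V2.
  assert (Tot : V0 + V1 + V2 = 2 * PI).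
  { destruct (Rtotal_order l 0) as [h|[h|h]]; [|contradiction|].
    - rewrite (V0m h), (V1e (or_introl h)), (V2e (Rlt_trans _ _ _ h Rlt_0_1)); ring.
    - destruct (Rtotal_order l 1) as [h'|[h'|h']]; [|contradiction|].
      + rewrite (V0e h), (V1m (conj h h')), (V2e h'); ring.
      + rewrite (V0e h), (V1e (or_intror h')), (V2m h'); ring. }
  rewrite EV0, EV1, EV2 in Tot. clear - Tot H.
  field_simplify_eq; [|lra]. lra.
Qed.


Theorem mainTheorem8 (psi : face -> pt) :
  is_TGraph psi ->
  (forall w : white, phi_ref psi w 0 + phi_ref psi w 1 + phi_ref psi w 2 = 1) /\
  (forall b : black, phi_ref_bw psi b 0 + phi_ref_bw psi b 1 + phi_ref_bw psi b 2 = -1).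
Proof.
  intros TG. split.
  - intros w. apply white_sum; exact TG.
  - intros b. apply black_sum; exact TG.
Qed.
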